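(* Let $K/F$ be a cyclic Galois extension of number fields of degree $m$ with $\mathrm{Gal}(K/F)=\langle\sigma\rangle$, with rings of integers $\mathcal{O}_F\subset\mathcal{O}_K$. Let $d\in\mathcal{O}_K^\times$ be such that $t^m-d$ is irreducible in $K[t;\sigma]$, and let $\Lambda=\mathcal{O}_K[t;\sigma]/\mathcal{O}_K[t;\sigma](t^m-d)$ be the natural order of the nonassociative cyclic division algebra $(K/F,\sigma,d)$. Let $\mathcal{I}=\mathfrak{q}_1^{s_1}\cdots\mathfrak{q}_t^{s_t}$ be a non-zero ideal of $\mathcal{O}_F$, with $\mathfrak{q}_1,\dots,\mathfrak{q}_t$ distinct prime ideals of $\mathcal{O}_F$. Then $$\Lambda/\mathcal{I}\Lambda\cong\big((\mathcal{O}_K/\mathfrak{q}_1^{s_1}\mathcal{O}_K)/(\mathcal{O}_F/\mathfrak{q}_1^{s_1}),\overline{\sigma},d+\mathfrak{q}_1^{s_1}\mathcal{O}_K\big)\times\dots\times\big((\mathcal{O}_K/\mathfrak{q}_t^{s_t}\mathcal{O}_K)/(\mathcal{O}_F/\mathfrak{q}_t^{s_t}),\overline{\sigma},d+\mathfrak{q}_t^{s_t}\mathcal{O}_K\big),$$ where in the $j$-th factor $\overline{\sigma}(u+\mathfrak{q}_j^{s_j}\mathcal{O}_K)=\sigma(u)+\mathfrak{q}_j^{s_j}\mathcal{O}_K$.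
   Context: For a unital associative ring $S$ with injective endomorphism $\sigma$, $S[t;\sigma]$ is the skew polynomial ring with $ta=\sigma(a)t$. For monic $f$ of degree $m$, the Petit algebra $S[t;\sigma]/S[t;\sigma]f$ is the set of polynomials of degree $<m$ with multiplication $g\circ h=gh\bmod_r f$ (remainder of right division by $f$), a unital nonassociative ring. For commutative rings $S_0\subset S$ with $S_0\subset\mathrm{Fix}(\sigma)$ and $c\in S$, the generalized nonassociative cyclic algebra $(S/S_0,\sigma,c)$ is $S[t;\sigma]/S[t;\sigma](t^m-c)$ regarded as an $S_0$-algebra. The direct product of nonassociative rings has componentwise operations. *)

(* Defs.v *)
From HB Require Import structures.
From mathcomp Require Import all_boot all_order all_algebra all_fingroup all_field.
Set Implicit Arguments. Unset Strict Implicit. Unset Printing Implicit Defensive.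
Import GRing.Theory.
Local Open Scope ring_scope.

Section Skew.
Variables (R : nzRingType) (sig : R -> R).

(* (sum a_i t^i)(sum b_j t^j) = sum a_i sig^i(b_j) t^(i+j)   (t a = sig(a) t) *)
Definition skmul (p q : {poly R}) : {poly R} :=
  \poly_(k < (size p + size q).-1)
     \sum_(i < k.+1) p`_i * iter i sig q`_(k - i).

Definition polyIn (C : R -> Prop) (p : {poly R}) := forall i, C p`_i.

Definition skunit_in (C : R -> Prop) (p : {poly R}) :=
  exists q, polyIn C q /\ skmul p q = 1 /\ skmul q p = 1.

Definition skirreducible_in (C : R -> Prop) (f : {poly R}) :=
  [/\ polyIn C f, f != 0, ~ skunit_in C f &
      forall g h, polyIn C g -> polyIn C h -> f = skmul g h ->
        skunit_in C g \/ skunit_in C h].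

(* remainder of right division by a monic f: p = q f + r, size r < size f,
   computed by the division algorithm (subtract (lead p) t^k f) *)
Fixpoint skrmod_rec (f : {poly R}) (n : nat) (p : {poly R}) : {poly R} :=
  match n with
  | 0 => p
  | n'.+1 =>
      if (size p < size f)%N then p
      else skrmod_rec f n'
             (p - skmul (lead_coef p *: 'X^(size p - size f)) f)
  end.
Definition skrmod (f p : {poly R}) := skrmod_rec f (size p) p.

Definition petit_mul (f g h : {poly R}) := skrmod f (skmul g h).
End Skew.

Section Ideals.
Variable (R : nzRingType).

Definition is_ideal (S I : R -> Prop) :=
  [/\ forall x, I x -> S x, I 0,
      forall x y, I x -> I y -> I (x + y),
      forall x, I x -> I (- x) &
      forall r x, S r -> I x -> I (r * x)].

Definition prime_ideal (S P : R -> Prop) :=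
  [/\ is_ideal S P, ~ P 1 &
      forall a b, S a -> S b -> P (a * b) -> P a \/ P b].

(* product of ideals (also: extension A*B of A to a larger ring B) *)
Definition idealM (A B : R -> Prop) : R -> Prop :=
  fun x => exists n (a b : 'I_n -> R),
    [/\ forall i, A (a i), forall i, B (b i) & x = \sum_(i < n) a i * b i].

Definition idealX (S A : R -> Prop) (n : nat) : R -> Prop :=
  iter n (idealM A) S.
End Ideals.

(* A/eA (elements: representatives satisfying PA) is isomorphic to B/eB:
   f induces a well-defined bijection of the quotients preserving +, * and 1. *)
Definition quot_ring_iso (A B : Type)
  (PA : A -> Prop) (eA : A -> A -> Prop) (addA mulA : A -> A -> A) (oneA : A)
  (PB : B -> Prop) (eB : B -> B -> Prop) (addB mulB : B -> B -> B) (oneB : B)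
  : Prop :=
  exists f : A -> B,
    [/\ forall a, PA a -> PB (f a),
        forall a a', PA a -> PA a' -> (eA a a' <-> eB (f a) (f a')),
        forall b, PB b -> (exists2 a, PA a & eB (f a) b),
        forall a a', PA a -> PA a' -> eB (f (addA a a')) (addB (f a) (f a')) &
        forall a a', PA a -> PA a' -> eB (f (mulA a a')) (mulB (f a) (f a')) /\
        eB (f oneA) oneB].

Section NF.
Variable L : splittingFieldType rat.

Definition ring_of_integers (E : {subfield L}) : L -> Prop :=
  fun x => x \in E /\ integralOver (intr : int -> L) x.

(* the natural order Lambda = O_K[t;sig]/O_K[t;sig](t^m - d) : polynomials of
   degree < m with coefficients in O_K *)
Definition in_order (OK : L -> Prop) (m : nat) (p : {poly L}) :=
  (size p <= m)%N /\ polyIn OK p.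

Definition ideal_times_order (sig : L -> L) (f : {poly L})
    (OK : L -> Prop) (m : nat) (I : L -> Prop) : {poly L} -> Prop :=
  fun p => exists n (a : 'I_n -> L) (l : 'I_n -> {poly L}),
    [/\ forall i, I (a i), forall i, in_order OK m (l i) &
        p = \sum_(i < n) petit_mul sig f (a i)%:P (l i)].

(* congruence of polynomials coefficientwise modulo an ideal J of O_K;
   polynomials over O_K/J are represented by lifts to O_K *)
Definition poly_cong (J : L -> Prop) (p q : {poly L}) :=
  forall i, J (p - q)`_i.
End NF.

(* Main.v *)
Require Import Defs.
From HB Require Import structures.
From mathcomp Require Import all_boot all_order all_algebra all_fingroup all_field.
From mathcomp Require Import ring.
From Stdlib Require Import Classical ClassicalEpsilon.
Local Open Scope ring_scope.
Import GRing.Theory.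
Set Implicit Arguments. Unset Strict Implicit. Unset Printing Implicit Defensive.

Section Gen.
Variable R : comNzRingType.
Implicit Types A B C S T X Y : R -> Prop.

Definition subring S := [/\ S 0, S 1, forall x y, S x -> S y -> S (x + y),
  forall x, S x -> S (- x) & forall x y, S x -> S y -> S (x * y)].

Definition comax A B := exists a b, [/\ A a, B b & a + b = 1].

Lemma sum_closedP (P : R -> Prop) n (G : 'I_n -> R) :
  P 0 -> (forall x y, P x -> P y -> P (x + y)) -> (forall i, P (G i)) ->
  P (\sum_(i < n) G i).
Proof. by move=> P0 PD PG; apply: big_ind => // i _; apply: PG. Qed.

Lemma idealM_mul A B a b : A a -> B b -> idealM A B (a * b).
Proof.
by move=> Ha Hb; exists 1%N, (fun _ => a), (fun _ => b); split => //; rewrite big_ord1.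
Qed.

Lemma idealM0 A B : idealM A B 0.
Proof.
exists 0%N, (fun _ => 0), (fun _ => 0); split; try by case.
by rewrite big_ord0.
Qed.

Lemma idealM_add A B x y : idealM A B x -> idealM A B y -> idealM A B (x + y).
Proof.
case=> n [a [b [Ha Hb ->]]] [k [a' [b' [Ha' Hb' ->]]]].
exists (n + k)%N,
  (fun i => match split i with inl i1 => a i1 | inr i2 => a' i2 end),
  (fun i => match split i with inl i1 => b i1 | inr i2 => b' i2 end).
split.
- by move=> i; case: (split i).
- by move=> i; case: (split i).
rewrite big_split_ord /=; congr (_ + _); apply: eq_bigr => i _.
  by rewrite (unsplitK (inl _ i)).
by rewrite (unsplitK (inr _ i)).
Qed.

Lemma idealM_sum A B n (G : 'I_n -> R) :
  (forall i, idealM A B (G i)) -> idealM A B (\sum_(i < n) G i).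
Proof. by apply: sum_closedP; [apply: idealM0 | apply: idealM_add]. Qed.

Lemma idealM_scale A A' B c x : (forall a, A a -> A' (c * a)) ->
  idealM A B x -> idealM A' B (c * x).
Proof.
move=> HA [n [a [b [Ha Hb ->]]]]; exists n, (fun i => c * a i), b; split => //; first by move=> i; apply: HA.
by rewrite mulr_sumr; apply: eq_bigr => i _; rewrite mulrA.
Qed.

Lemma idealM_mono A A' B B' x : (forall y, A y -> A' y) -> (forall y, B y -> B' y) ->
  idealM A B x -> idealM A' B' x.
Proof.
move=> HA HB [n [a [b [Ha Hb ->]]]]; exists n, a, b; split => // i.
by apply: HA. by apply: HB.
Qed.

Lemma ideal_sum S A n (G : 'I_n -> R) : is_ideal S A ->
  (forall i, A (G i)) -> A (\sum_(i < n) G i).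
Proof. by case=> _ A0 AD _ _; apply: sum_closedP. Qed.

Lemma idealM_subl S A B x : is_ideal S A -> (forall y, B y -> S y) ->
  idealM A B x -> A x.
Proof.
move=> IA HB [n [a [b [Ha Hb ->]]]]; apply: (ideal_sum IA) => i.
by rewrite mulrC; case: IA => _ _ _ _; apply; [apply: HB|].
Qed.

Lemma idealM_subr S A B x : (forall y, A y -> S y) -> is_ideal S B ->
  idealM A B x -> B x.
Proof.
move=> HA IB [n [a [b [Ha Hb ->]]]]; apply: (ideal_sum IB) => i.
by case: IB => _ _ _ _; apply; [apply: HA|].
Qed.

Lemma idealM_ideal S A B : is_ideal S A -> is_ideal S B -> is_ideal S (idealM A B).
Proof.
move=> IA IB; split.
- move=> x /(idealM_subl IA (fun y => match IB with And5 h _ _ _ _ => h y end)).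
  by case: IA => h _ _ _ _; apply: h.
- exact: idealM0.
- exact: idealM_add.
- move=> x Hx; rewrite -mulN1r; apply: idealM_scale Hx => a Ha.
  by rewrite mulN1r; case: IA => _ _ _ h _; apply: h.
- move=> r x Sr Hx; apply: idealM_scale Hx => a Ha.
  by case: IA => _ _ _ _ h; apply: h.
Qed.

Lemma ideal_self S : subring S -> is_ideal S S.
Proof. by case=> S0 S1 SD SN SM; split. Qed.

Lemma idealX_ideal S A n : subring S -> is_ideal S A -> is_ideal S (idealX S A n).
Proof.
move=> SS IA; elim: n => [|n IH] /=; first exact: ideal_self.
exact: idealM_ideal.
Qed.

Lemma comax_sym A B : comax A B -> comax B A.
Proof. by case=> a [b [Ha Hb E]]; exists b, a; split => //; rewrite addrC. Qed.

Lemma comaxM S C X Y : is_ideal S C -> (forall y, X y -> S y) ->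
  comax C X -> comax C Y -> comax C (idealM X Y).
Proof.
move=> [_ _ CD _ CM] HX [a [b [Ha Hb E1]]] [a' [c [Ha' Hc E2]]].
exists (a + b * a'), (b * c); split.
- by apply: CD => //; apply: CM => //; apply: HX.
- exact: idealM_mul.
by rewrite -addrA -mulrDr E2 mulr1.
Qed.

Lemma comaxX S A B n : subring S -> is_ideal S A -> is_ideal S B ->
  comax A B -> comax A (idealX S B n).
Proof.
move=> SS IA IB AB; elim: n => [|n IH] /=.
  case: SS => _ S1 _ _ _; case: IA => _ A0 _ _ _.
  by exists 0, 1; split => //; rewrite add0r.
apply: (comaxM IA) => //; by case: IB.
Qed.

Lemma comaxXX S A B n k : subring S -> is_ideal S A -> is_ideal S B ->
  comax A B -> comax (idealX S A n) (idealX S B k).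
Proof.
move=> SS IA IB AB; apply: comax_sym; apply: comaxX => //.
  exact: idealX_ideal.
by apply: comax_sym; apply: comaxX.
Qed.

Section Fold.
Variables (I : eqType) (S T : R -> Prop) (Q : I -> R -> Prop).
Hypothesis SS : subring S.
Hypothesis IQ : forall j, is_ideal S (Q j).

Lemma bigI_ideal r : is_ideal S (\big[@idealM R/S]_(j <- r) Q j).
Proof.
elim: r => [|j r IH]; first by rewrite big_nil; apply: ideal_self.
by rewrite big_cons; apply: idealM_ideal.
Qed.

Lemma bigI_sub r j x : j \in r -> (\big[@idealM R/S]_(j <- r) Q j) x -> Q j x.
Proof.
elim: r => [|k r IH] //; rewrite inE big_cons => /orP[/eqP->|jr] H.
  by apply: (idealM_subl (IQ k) _ H) => y; case: (bigI_ideal r) => h _ _ _ _; apply: h.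
apply: IH => //; apply: (idealM_subr _ (bigI_ideal r) H).
by move=> y; case: (IQ k) => h _ _ _ _; apply: h.
Qed.

Lemma comax_bigI C r : is_ideal S C -> (forall k, k \in r -> comax C (Q k)) ->
  comax C (\big[@idealM R/S]_(j <- r) Q j).
Proof.
move=> IC; elim: r => [|k r IH] H.
  rewrite big_nil; case: SS => _ S1 _ _ _; case: IC => _ C0 _ _ _.
  by exists 0, 1; split => //; rewrite add0r.
rewrite big_cons; apply: (comaxM IC).
- by move=> y; case: (IQ k) => h _ _ _ _; apply: h.
- by apply: H; rewrite inE eqxx.
by apply: IH => k' kr; apply: H; rewrite inE kr orbT.
Qed.

Hypothesis TS : forall x, S x -> T x.
Hypothesis TM : forall x y, T x -> T y -> T (x * y).

Lemma bigI_inter r x : uniq r ->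
  (forall i j, i \in r -> j \in r -> i != j -> comax (Q i) (Q j)) ->
  T x -> (forall j, j \in r -> idealM (Q j) T x) ->
  idealM (\big[@idealM R/S]_(j <- r) Q j) T x.
Proof.
elim: r => [|j r IH] Ur Hc Tx Hx.
  by rewrite big_nil -[x]mul1r; apply: idealM_mul => //; case: SS.
move: Ur => /= /andP[jr Ur].
have Hr : idealM (\big[@idealM R/S]_(j <- r) Q j) T x.
  apply: IH => //.
    by move=> i k ir kr; apply: Hc; rewrite inE ?ir ?kr orbT.
  by move=> k kr; apply: Hx; rewrite inE kr orbT.
have [a [b [Ha Hb E]]] : comax (Q j) (\big[@idealM R/S]_(j <- r) Q j).
  apply: comax_bigI => // k kr; apply: Hc; rewrite ?inE ?eqxx ?kr ?orbT //.
  by apply/eqP => ejk; rewrite ejk kr in jr.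
rewrite -[x]mul1r -E mulrDl big_cons; apply: idealM_add.
  by apply: idealM_scale Hr => p Hp; apply: idealM_mul.
apply: idealM_scale (Hx j _) => [q' Hq|]; last by rewrite inE eqxx.
by rewrite mulrC; apply: idealM_mul.
Qed.
End Fold.
End Gen.

Section NT.
Variable L : splittingFieldType rat.
Variable F : {subfield L}.
Local Notation OF := (ring_of_integers F).

Lemma OF_subring : subring OF.
Proof.
split.
- by split; [rewrite rpred0 | apply: integral0].
- by split; [rewrite rpred1 | apply: integral1].
- by move=> x y [Fx Ix] [Fy Iy]; split; [rewrite rpredD | apply: integral_add].
- by move=> x [Fx Ix]; split; [rewrite rpredN | apply: integral_opp].
- by move=> x y [Fx Ix] [Fy Iy]; split; [rewrite rpredM | apply: integral_mul].
Qed.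

Lemma OF_int (z : int) : OF (intr z).
Proof. by split; [rewrite rpred_int | apply: integral_id]. Qed.

Lemma OF_horner (g : {poly int}) x : OF x -> OF (map_poly intr g).[x].
Proof.
move=> Ox; case: OF_subring => _ _ SD _ SM.
elim/poly_ind: g => [|g c IH]; first by rewrite rmorph0 horner0; case: OF_subring.
rewrite rmorphD rmorphM /= map_polyX map_polyC /= !hornerE.
by apply: SD; [apply: SM | apply: OF_int].
Qed.

Lemma monic_decomp (g : {poly int}) : g \is monic -> (1 < size g)%N ->
  [/\ drop_poly 1 g \is monic, (size (drop_poly 1 g) < size g)%N &
      g = drop_poly 1 g * 'X + (g`_0)%:P].
Proof.
move=> mg sg; have Eg := poly_take_drop 1 g.
have Et : take_poly 1 g = (g`_0)%:P.
  by apply/polyP => i; rewrite coef_take_poly coefC; case: i.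
split.
- rewrite monicE /lead_coef size_drop_poly coef_drop_poly addn1 subn1 prednK.
    by move/monicP: mg; rewrite /lead_coef => ->.
  by rewrite -subn1 subn_gt0.
- by rewrite size_drop_poly subn1; case: (size g) sg => // n _; exact: ltnSn.
by rewrite -[g in LHS]Eg Et expr1 addrC.
Qed.

Lemma monic_small (g : {poly int}) : g \is monic -> (size g <= 1)%N -> g = 1.
Proof.
move=> mg sg; have: size g = 1%N.
  by apply/eqP; rewrite eqn_leq sg lt0n size_poly_eq0 monic_neq0.
move/eqP/size_poly1P => [c c0 Eg]; move: mg; rewrite Eg monicE lead_coefC.
by move/eqP->.
Qed.

Lemma horner_decomp (g : {poly int}) (x : L) :
  (map_poly intr (drop_poly 1 g * 'X + (g`_0)%:P)).[x] =
  (map_poly intr (drop_poly 1 g)).[x] * x + intr g`_0.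
Proof. by rewrite rmorphD rmorphM /= map_polyX map_polyC /= !hornerE. Qed.

Variable P : L -> Prop.
Hypothesis PP : prime_ideal OF P.

Lemma P_int_nonzero a : P a -> a != 0 -> exists n : nat, (0 < n)%N /\ P n%:R.
Proof.
case: PP => [[PS P0 PD PN PM] P1 Pp] Pa a0.
have [_ [g mg]] := (PS _ Pa); rewrite /root => /eqP ga.
elim: {g}(size g) {-2}g (leqnn (size g)) mg ga => [|N IH] g sg mg ga.
  by move: sg; rewrite leqn0 size_poly_eq0 (negbTE (monic_neq0 mg)).
have [sg1|sg1] := leqP (size g) 1.
  by move: ga; rewrite (monic_small mg sg1) rmorph1 hornerC => /eqP; rewrite oner_eq0.
have [mh sh Eg] := monic_decomp mg sg1.
move: ga; rewrite Eg horner_decomp => ga.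
have [c0|c0] := eqVneq (g`_0) 0.
  move: ga; rewrite c0 rmorph0 addr0 => /eqP; rewrite mulf_eq0 (negbTE a0) orbF => /eqP h0.
  by apply: (IH (drop_poly 1 g)) => //; rewrite -ltnS (leq_trans sh).
have Pc : P (intr g`_0).
  have -> : intr g`_0 = - ((map_poly intr (drop_poly 1 g)).[a] * a).
    by apply/eqP; rewrite -subr_eq0 opprK addrC ga.
  by apply: PN; apply: PM => //; apply: OF_horner; apply: PS.
move: Pc c0; move: (g`_0) => c Pc c0.
exists `|c|%N; split; first by rewrite absz_gt0.
move: Pc c0; case: c => n.
  by rewrite absz_nat /= => Pn n0; move: Pn; rewrite pmulrn.
by rewrite NegzE abszN absz_nat /= => Pn _; rewrite -[_%:R]opprK; apply: PN; move: Pn; rewrite rmorphN.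
Qed.

Lemma P_prime : (exists2 a, P a & a != 0) -> exists p : nat, prime p /\ P p%:R.
Proof.
case=> a Pa a0; have [n [n0 Pn]] := P_int_nonzero Pa a0.
case: PP => [[PS P0 PD PN PM] P1 Pp].
elim: n {-2}n (leqnn n) n0 Pn => [|N IH] n nN n0 Pn; first by move: n0; rewrite lt0n -leqn0 nN.
have [n1|n1] := leqP n 1.
  by move: Pn; have -> : n = 1%N by apply/eqP; rewrite eqn_leq n1.
have pp := pdiv_prime n1.
have Edec : n = (pdiv n * (n %/ pdiv n))%N by rewrite mulnC divnK // pdiv_dvd.
move: Pn; rewrite Edec natrM => /Pp [].
- exact: OF_int (Posz _).
- exact: OF_int (Posz _).
- by move=> H; exists (pdiv n).
move=> H; apply: (IH (n %/ pdiv n)%N) => //.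
- rewrite -ltnS (leq_trans _ nN) // ltn_Pdiv ?prime_gt1 //; by rewrite ltnW.
- by rewrite divn_gt0 ?pdiv_gt0 // dvdn_leq ?pdiv_dvd // ltnW.
Qed.

Lemma P_maximal (x : L) : (exists2 a, P a & a != 0) -> OF x -> ~ P x ->
  exists y r : L, [/\ OF y, P r & x * y + r = 1].
Proof.
move=> nz Ox nPx; have [p [pp Pp]] := P_prime nz.
case: PP => [[PS P0 PD PN PM] P1 Pprime].
have [_ [g mg]] := Ox; rewrite /root => /eqP gx.
have : P (map_poly intr g).[x] by rewrite gx.
elim: {g}(size g) {-2}g (leqnn (size g)) mg {gx} => [|N IH] g sg mg Pg.
  by move: sg; rewrite leqn0 size_poly_eq0 (negbTE (monic_neq0 mg)).
have [sg1|sg1] := leqP (size g) 1.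
  by move: Pg; rewrite (monic_small mg sg1) rmorph1 hornerC.
have [mh sh Eg] := monic_decomp mg sg1.
move: Pg; rewrite Eg horner_decomp => Pg.
set h := (map_poly intr (drop_poly 1 g)).[x] in Pg *.
set c := g`_0 in Pg *.
have Oh : OF h by apply: OF_horner.
case: (classic (P (intr c))) => Pc.
  have : P (h * x).
    have -> : h * x = (h * x + intr c) + - intr c by rewrite addrK.
    by apply: PD => //; apply: PN.
  case/Pprime => // Ph.
  apply: (IH (drop_poly 1 g)) => //; rewrite -ltnS (leq_trans sh) //.
have cop : coprime p `|c|.
  rewrite prime_coprime //; apply/negP => H; apply: Pc.
  have /dvdzP [k ->] : (p%:Z %| c)%Z by [].
  rewrite rmorphM /=; apply: PM; first exact: OF_int.
  by move: Pp; rewrite pmulrn.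
case: (Bezoutz c p) => u [v Euv].
have g1 : gcdz c p = 1 by rewrite /gcdz gcdnC; move/eqP: cop => ->.
rewrite g1 in Euv.
case: OF_subring => S0 S1 SD SN SM.
exists (- (intr u * h)), (intr u * (h * x + intr c) + intr v * p%:R); split.
- by apply: SN; apply: SM => //; apply: OF_int.
- by apply: PD; apply: PM => //; apply: OF_int.
have : intr (u * c + v * p%:Z) = 1 :> L by rewrite Euv rmorph1.
rewrite rmorphD !rmorphM /= -pmulrn => E; apply: etrans E; ring.
Qed.
End NT.

Section Sk.
Variables (R : nzRingType) (sig : R -> R).

Lemma skmulC (a : R) (l : {poly R}) : skmul sig a%:P l = a *: l.
Proof.
apply/polyP => k; rewrite coef_poly coefZ.
have -> : \sum_(i < k.+1) a%:P`_i * iter i sig l`_(k - i) = a * l`_k.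
  rewrite big_ord_recl /= coefC /= subn0 big1 ?addr0 // => i _.
  by rewrite coefC /= mul0r.
case: ifP => // /negbT; rewrite -leqNgt.
have [->|a0] := eqVneq a 0; first by rewrite mul0r.
by rewrite size_polyC a0 /= => H; rewrite nth_default ?mulr0.
Qed.

Lemma skrmod_small (f p : {poly R}) : (size p < size f)%N -> skrmod sig f p = p.
Proof. by rewrite /skrmod => H; case: (size p) => //= n; rewrite H. Qed.

Lemma petit_C (f l : {poly R}) (a : R) : (size l < size f)%N ->
  petit_mul sig f a%:P l = a *: l.
Proof.
move=> sl; rewrite /petit_mul skmulC skrmod_small //.
exact: leq_ltn_trans (size_scale_leq _ _) sl.
Qed.
End Sk.

Unset Implicit Arguments. Set Strict Implicit. Set Printing Implicit Defensive.

Lemma ITO0 (L : splittingFieldType rat) sig f (OK : L -> Prop) m I :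
  ideal_times_order sig f OK m I 0.
Proof.
exists 0%N, (fun _ => 0), (fun _ => 0); split; try by case.
by rewrite big_ord0.
Qed.

Lemma ITO_add (L : splittingFieldType rat) sig f (OK : L -> Prop) m I x y :
  ideal_times_order sig f OK m I x -> ideal_times_order sig f OK m I y ->
  ideal_times_order sig f OK m I (x + y).
Proof.
case=> n [a [b [Ha Hb ->]]] [k [a' [b' [Ha' Hb' ->]]]].
exists (n + k)%N,
  (fun i => match split i with inl i1 => a i1 | inr i2 => a' i2 end),
  (fun i => match split i with inl i1 => b i1 | inr i2 => b' i2 end).
split.
- by move=> i; case: (split i).
- by move=> i; case: (split i).
rewrite big_split_ord /=; congr (_ + _); apply: eq_bigr => i _.
  by rewrite (unsplitK (inl _ i)).
by rewrite (unsplitK (inr _ i)).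
Qed.

Theorem lemma2 (L : splittingFieldType rat) (F K : {subfield L})
  (s : gal_of K) (m : nat) (d : L)
  (t : nat) (q : 'I_t -> (L -> Prop)) (e : 'I_t -> nat) (I : L -> Prop) :
  galois F K ->
  'Gal(K / F)%g = <[s]>%g ->
  \dim_F K = m ->
  (* d is a unit of O_K *)
  ring_of_integers K d -> d != 0 -> ring_of_integers K d^-1 ->
  (* t^m - d irreducible in K[t;sigma] *)
  skirreducible_in (fun x => s x) (fun x => x \in K) ('X^m - d%:P) ->
  (* the q_j are distinct prime ideals of O_F *)
  (forall j, prime_ideal (ring_of_integers F) (q j)) ->
  (forall i j, i != j -> ~ (forall x, q i x <-> q j x)) ->
  (* I = q_1^{e_1} ... q_t^{e_t} is a non-zero ideal of O_F *)
  (forall x, I x <->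
     (\big[@idealM L/ring_of_integers F]_(j < t)
        idealX (ring_of_integers F) (q j) (e j)) x) ->
  (exists2 x, I x & x != 0) ->
  let OK := ring_of_integers K in
  let sig := fun x : L => s x in
  let f := 'X^m - d%:P in
  let J := fun j : 'I_t =>
             idealM (idealX (ring_of_integers F) (q j) (e j)) OK in
  quot_ring_iso
    (* Lambda / I Lambda *)
    (in_order OK m)
    (fun p p' => ideal_times_order sig f OK m I (p - p'))
    +%R (petit_mul sig f) 1
    (* product over j of ((O_K/J_j)/(O_F/q_j^{e_j}), sigma-bar, d + J_j) *)
    (fun b : 'I_t -> {poly L} => forall j, in_order OK m (b j))
    (fun b b' => forall j, poly_cong (J j) (b j) (b' j))
    (fun b b' j => b j + b' j)
    (fun b b' j => petit_mul sig f (b j) (b' j))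
    (fun _ => 1).
Proof.
move=> galFK _ dimFK _ _ _ _ Hq Hdist HI [x0 Ix0 x0nz] OK sig f J.
have FK : (F <= K)%VS by case/and3P: galFK.
have m0 : (0 < m)%N.
  by rewrite -dimFK divn_gt0 ?adim_gt0 // dvdn_leq ?adim_gt0 // field_dimS.
have sf : size f = m.+1 := size_XnsubC _ m0.
have SF := OF_subring F; have SK := OF_subring K.
have OFOK : forall x, ring_of_integers F x -> OK x.
  by move=> x [Fx Ix]; split => //; apply: (subvP FK).
have OKM : forall x y, OK x -> OK y -> OK (x * y) by case: SK.
have Iq : forall j, is_ideal (ring_of_integers F) (q j) by move=> j; case: (Hq j).
pose Q := fun j => idealX (ring_of_integers F) (q j) (e j).
have IQ : forall j, is_ideal (ring_of_integers F) (Q j).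
  by move=> j; apply: idealX_ideal => //; case: (Hq j).
have ISub : forall j x, I x -> Q j x.
  by move=> j x /HI Hx; apply: (bigI_sub SF IQ (mem_index_enum j) Hx).
have Qq : forall j x, (0 < e j)%N -> Q j x -> q j x.
  move=> j x; rewrite /Q; case: (e j) => //= k _ H.
  apply: (idealM_subl (Iq j) _ H) => y.
  by case: (idealX_ideal k SF (Iq j)) => h _ _ _ _; apply: h.
have Comax : forall i j, i != j -> comax (Q i) (Q j).
  move=> i j ij.
  case Ei: (e i) => [|ki].
    exists 1, 0; split; rewrite ?addr0 //; first by rewrite /Q Ei /=; case: SF.
    by case: (IQ j).
  case Ej: (e j) => [|kj].
    exists 0, 1; split; rewrite ?add0r //; first by case: (IQ i).
    by rewrite /Q Ej /=; case: SF.
  have nzi : exists2 a, q i a & a != 0.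
    by exists x0 => //; apply: Qq; [rewrite Ei | apply: ISub].
  have nzj : exists2 a, q j a & a != 0.
    by exists x0 => //; apply: Qq; [rewrite Ej | apply: ISub].
  have cq : comax (q i) (q j).
    have HH : (exists x, q i x /\ ~ q j x) \/ (exists x, q j x /\ ~ q i x).
      apply: NNPP => H; apply: (Hdist i j ij) => x; split => Hx;
        apply: NNPP => Hn; apply: H; [left|right]; exists x; by split.
    case: HH => [[x [qix nqjx]] | [x [qjx nqix]]].
    + have Ox : ring_of_integers F x by case: (Hq i) => [[h _ _ _ _] _ _]; apply: h.
      have [y [r [Oy qr E]]] := P_maximal (Hq j) nzj Ox nqjx.
      exists (x * y), r; split => //; rewrite mulrC.
      by case: (Hq i) => [[_ _ _ _ h] _ _]; apply: h.
    + have Ox : ring_of_integers F x by case: (Hq j) => [[h _ _ _ _] _ _]; apply: h.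
      have [y [r [Oy qr E]]] := P_maximal (Hq i) nzi Ox nqix.
      apply: comax_sym; exists (x * y), r; split => //; rewrite mulrC.
      by case: (Hq j) => [[_ _ _ _ h] _ _]; apply: h.
  by apply: comaxXX => //; apply: Iq.
have Comax' : forall i j, i \in index_enum 'I_t -> j \in index_enum 'I_t ->
    i != j -> comax (Q i) (Q j) by move=> i j _ _; apply: Comax.
have OKD : forall x y, OK x -> OK y -> OK (x + y) by case: SK.
have OKN : forall x, OK x -> OK (- x) by case: SK.
have OK0 : OK 0 by case: SK.
have petitC : forall a l, in_order OK m l -> petit_mul sig f a%:P l = a *: l.
  by move=> a l [sl _]; apply: petit_C; rewrite sf ltnS.
have eqv : forall p p', in_order OK m p -> in_order OK m p' ->
    (ideal_times_order sig f OK m I (p - p') <->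
     forall j, poly_cong (J j) p p').
  move=> p p' [sp Op] [sp' Op']; split.
    case=> n [a [l [Ia Ol E]]] j i; rewrite E coef_sum.
    apply: idealM_sum => k; rewrite petitC // coefZ.
    apply: idealM_mul; first exact: ISub.
    by case: (Ol k) => _; apply.
  move=> H; set D := p - p'.
  have sD : (size D <= m)%N.
    by rewrite (leq_trans (size_add _ _)) // size_opp geq_max sp sp'.
  have ODi : forall i, OK D`_i by move=> i; rewrite coefB; apply: OKD; [|apply: OKN].
  have EI : forall i, idealM I OK D`_i.
    move=> i; apply: (idealM_mono (B := OK) (B' := OK) (A := \big[@idealM L/ring_of_integers F]_(j < t) Q j)).
    - by move=> y /HI.
    - by [].
    apply: (bigI_inter SF IQ (index_enum_uniq _) Comax' (ODi i)).
    by move=> j _; apply: H.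
  have -> : D = \sum_(i < m) D`_i *: 'X^i.
    rewrite -poly_def; apply/polyP => k; rewrite coef_poly.
    by case: ltnP => // hk; rewrite nth_default // (leq_trans sD hk).
  apply: sum_closedP; [exact: ITO0 | exact: ITO_add |] => i.
  case: (EI i) => n [a [o [Ia Oo Ei]]].
  exists n, a, (fun k => o k *: 'X^i); split => //.
    move=> k; split.
      by rewrite (leq_trans (size_scale_leq _ _)) // size_polyXn.
    move=> k'; rewrite coefZ coefXn; case: eqP => _; rewrite ?mulr1 ?mulr0 //.
  rewrite Ei scaler_suml; apply: eq_bigr => k _; rewrite petitC ?scalerA //.
  split; first by rewrite (leq_trans (size_scale_leq _ _)) // size_polyXn.
  move=> k'; rewrite coefZ coefXn; case: eqP => _; rewrite ?mulr1 ?mulr0 //.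
have Heps : forall j, exists eps, [/\ ring_of_integers F eps, Q j (eps - 1) &
    forall k, k != j -> Q k eps].
  move=> j.
  have : forall r : seq 'I_t, (forall k, k \in r -> k != j) ->
      exists eps, [/\ ring_of_integers F eps, Q j (eps - 1) &
      forall k, k \in r -> Q k eps].
    elim=> [|k r IH] Hr.
      exists 1; split => //; first by case: SF.
      by rewrite subrr; case: (IQ j).
    have [eps' [O' Q' R']] : exists eps, [/\ ring_of_integers F eps, Q j (eps - 1) &
        forall k, k \in r -> Q k eps].
      by apply: IH => k' k'r; apply: Hr; rewrite inE k'r orbT.
    have jk : j != k by rewrite eq_sym; apply: Hr; exact: mem_head.
    have [a [b [Qa Qb Eab]]] := Comax j k jk.
    have Ob : ring_of_integers F b by case: (IQ k) => h _ _ _ _; apply: h.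
    exists (eps' * b); split.
    - by case: SF => _ _ _ _; apply.
    - have -> : eps' * b - 1 = (eps' - 1) + - (eps' * a).
        apply/eqP; rewrite -subr_eq0; apply/eqP.
        transitivity (eps' * (a + b - 1)); first by ring.
        by rewrite Eab subrr mulr0.
      case: (IQ j) => _ _ QD QN QM; apply: QD => //; apply: QN; exact: QM.
    - move=> k0; rewrite inE => /orP[/eqP->|k0r].
        by case: (IQ k) => _ _ _ _; apply.
      by rewrite mulrC; case: (IQ k0) => _ _ _ _; apply => //; apply: R'.
  move=> /(_ [seq k <- index_enum 'I_t | k != j]) [].
    by move=> k; rewrite mem_filter => /andP[].
  move=> eps [Oe Qe Re]; exists eps; split => // k kj; apply: Re.
  by rewrite mem_filter kj mem_index_enum.
pose eps := fun j => proj1_sig (constructive_indefinite_description _ (Heps j)).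
have Peps : forall j, [/\ ring_of_integers F (eps j), Q j (eps j - 1) &
    forall k, k != j -> Q k (eps j)].
  by move=> j; rewrite /eps; case: (constructive_indefinite_description _ _).
have refl : forall j p, poly_cong (J j) p p.
  by move=> j p i; rewrite subrr coef0; apply: idealM0.
exists (fun p (_ : 'I_t) => p); split.
- by move=> a Ha j.
- by move=> a a' Ha Ha'; apply: eqv.
- move=> b Hb; exists (\sum_(k < t) eps k *: b k).
    apply: sum_closedP.
    + by split; rewrite ?size_poly0 // => i; rewrite coef0.
    + move=> x y [sx Ox] [sy Oy]; split.
        by rewrite (leq_trans (size_add _ _)) // geq_max sx sy.
      by move=> i; rewrite coefD; apply: OKD.
    + move=> k; case: (Hb k) => sk Ok; split.
        by rewrite (leq_trans (size_scale_leq _ _)).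
      move=> i; rewrite coefZ; apply: OKM => //; apply: OFOK.
      by case: (Peps k).
  move=> j i; rewrite coefB coef_sum (bigD1 j) //= coefZ.
  set S := \sum_(k < t | k != j) _.
  have -> : eps j * (b j)`_i + S - (b j)`_i = (eps j - 1) * (b j)`_i + S.
    by ring.
  apply: idealM_add.
    apply: idealM_mul; first by case: (Peps j).
    by case: (Hb j) => _; apply.
  rewrite /S; apply: big_ind => //; first exact: idealM0; first exact: idealM_add.
  move=> k kj; rewrite coefZ; apply: idealM_mul.
    by case: (Peps k) => _ _; apply; rewrite eq_sym.
  by case: (Hb k) => _; apply.
- by move=> a a' _ _ j; apply: refl.
- by move=> a a' _ _; split => j; apply: refl.
Qed.
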